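(* Let $n\geq 1$ be a natural number and let $T$ be a complete theory which is $n$-transitive and not $(n+1)$-transitive. Then $T$ is not $n$-ary.
   Context: For a natural number $m$, a complete theory $T$ is $m$-transitive if every complete type $q(x_1,\ldots,x_m)\in S(T)$ is forced (modulo $T$) by its restriction to the empty language, i.e. by the formulas of $q$ built only from equalities $x_i\approx x_j$. For $n\geq 1$, a formula of $T$ is $n$-ary if it is $T$-equivalent to a Boolean combination of $T$-formulas each having at most $n$ free variables. $T$ is unary ($1$-ary) if every $T$-formula is $T$-equivalent to a Boolean combination of $T$-formulas with one free variable and formulas $x\approx y$; for $n\geq 2$, $T$ is $n$-ary if every $T$-formula is $n$-ary. *)

(* Defs.v *)
From mathcomp Require Import all_boot.
From Stdlib Require Import List.



Unset Printing Implicit Defensive.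

(* A first-order signature: function symbols (constants = arity 0) and
   relation symbols, each with an arity. *)
Record signature := Signature {
  funs : Type;
  rels : Type;
  fun_ar : funs -> nat;
  rel_ar : rels -> nat }.

Section FOL.
Variable L : signature.

Inductive term : Type :=
| tvar : nat -> term
| tapp : forall f : funs L, ('I_(fun_ar L f) -> term) -> term.

Inductive formula : Type :=
| feq : term -> term -> formula
| frel : forall r : rels L, ('I_(rel_ar L r) -> term) -> formula
| fneg : formula -> formula
| fand : formula -> formula -> formula
| fex : nat -> formula -> formula.

Record structure := Structure {
  dom : Type;
  dom_inh : inhabited dom;
  ifun : forall f : funs L, ('I_(fun_ar L f) -> dom) -> dom;
  irel : forall r : rels L, ('I_(rel_ar L r) -> dom) -> Prop }.

Fixpoint teval (M : structure) (a : nat -> dom M) (t : term) : dom M :=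
  match t with
  | tvar i => a i
  | tapp f args => ifun M f (fun k => teval M a (args k))
  end.

Definition update (M : structure) (a : nat -> dom M) (x : nat) (d : dom M) :
  nat -> dom M := fun i => if Nat.eqb i x then d else a i.

Fixpoint sat (M : structure) (a : nat -> dom M) (phi : formula) {struct phi} : Prop :=
  match phi with
  | feq t u => teval M a t = teval M a u
  | frel r args => irel M r (fun k => teval M a (args k))
  | fneg psi => ~ sat M a psi
  | fand psi chi => sat M a psi /\ sat M a chi
  | fex x psi => exists d, sat M (update M a x d) psi
  end.

Inductive tfree (i : nat) : term -> Prop :=
| tfree_var : tfree i (tvar i)
| tfree_app : forall f args (k : 'I_(fun_ar L f)),
    tfree i (args k) -> tfree i (tapp f args).

Fixpoint ffree (i : nat) (phi : formula) : Prop :=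
  match phi with
  | feq t u => tfree i t \/ tfree i u
  | frel r args => exists k, tfree i (args k)
  | fneg psi => ffree i psi
  | fand psi chi => ffree i psi \/ ffree i chi
  | fex x psi => i <> x /\ ffree i psi
  end.

Definition sentence (phi : formula) : Prop := forall i, ~ ffree i phi.

Definition at_most_free (n : nat) (phi : formula) : Prop :=
  exists l : list nat, (length l <= n)%coq_nat /\ forall i, ffree i phi -> In i l.

Definition free_among (m : nat) (phi : formula) : Prop :=
  forall i, ffree i phi -> (i < m)%coq_nat.

Definition theory := formula -> Prop.

Definition is_model (T : theory) (M : structure) : Prop :=
  forall phi, T phi -> forall a, sat M a phi.

(* Semantic consequence modulo T (equivalent to provability by completeness). *)
Definition entails (T : theory) (phi : formula) : Prop :=
  forall M, is_model T M -> forall a, sat M a phi.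

Definition complete_theory (T : theory) : Prop :=
  [/\ (forall phi, T phi -> sentence phi),
      (exists M, is_model T M) &
      (forall phi, sentence phi -> entails T phi \/ entails T (fneg phi))].

(* q is a complete type in the variables x_0, ..., x_(m-1) over T, i.e. q is
   in S_m(T): a set of formulas in these variables, consistent with T, and
   containing phi or its negation for every formula phi in these variables. *)
Definition complete_type (T : theory) (m : nat) (q : formula -> Prop) : Prop :=
  [/\ (forall phi, q phi -> free_among m phi),
      (exists M (a : nat -> dom M), is_model T M /\ forall phi, q phi -> sat M a phi) &
      (forall phi, free_among m phi -> q phi \/ q (fneg phi))].

(* Formulas built only from equalities x_i = x_j (formulas of the empty
   language in the variables). *)
Inductive eq_formula : formula -> Prop :=
| eqf_eq : forall i j, eq_formula (feq (tvar i) (tvar j))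
| eqf_neg : forall phi, eq_formula phi -> eq_formula (fneg phi)
| eqf_and : forall phi psi, eq_formula phi -> eq_formula psi ->
    eq_formula (fand phi psi).

(* q is forced modulo T by its restriction to the empty language. *)
Definition forced_by_eq (T : theory) (q : formula -> Prop) : Prop :=
  forall M, is_model T M -> forall a : nat -> dom M,
    (forall psi, q psi -> eq_formula psi -> sat M a psi) ->
    forall phi, q phi -> sat M a phi.

Definition m_transitive (T : theory) (m : nat) : Prop :=
  forall q, complete_type T m q -> forced_by_eq T q.

Definition T_equiv (T : theory) (phi psi : formula) : Prop :=
  forall M, is_model T M -> forall a : nat -> dom M, sat M a phi <-> sat M a psi.

Inductive bool_comb (S : formula -> Prop) : formula -> Prop :=
| bc_atom : forall phi, S phi -> bool_comb S phi
| bc_neg : forall phi, bool_comb S phi -> bool_comb S (fneg phi)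
| bc_and : forall phi psi, bool_comb S phi -> bool_comb S psi ->
    bool_comb S (fand phi psi).

Definition nary_formula (T : theory) (n : nat) (phi : formula) : Prop :=
  exists psi, bool_comb (at_most_free n) psi /\ T_equiv T phi psi.

Definition unary_theory (T : theory) : Prop :=
  forall phi, exists psi,
    bool_comb (fun chi => at_most_free 1 chi \/
                          exists i j, chi = feq (tvar i) (tvar j)) psi
    /\ T_equiv T phi psi.

Definition nary_theory (T : theory) (n : nat) : Prop :=
  if n == 1 then unary_theory T else forall phi, nary_formula T n phi.

End FOL.

Arguments tvar {L} _.
Arguments tapp {L} _ _.
Arguments feq {L} _ _.
Arguments frel {L} _ _.
Arguments fneg {L} _.
Arguments fand {L} _ _.
Arguments fex {L} _ _.
Arguments sat {L} M a phi.
Arguments teval {L} M a t.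
Arguments ffree {L} i phi.
Arguments sentence {L} phi.
Arguments is_model {L} T M.
Arguments entails {L} T phi.
Arguments complete_theory {L} T.
Arguments complete_type {L} T m q.
Arguments forced_by_eq {L} T q.
Arguments m_transitive {L} T m.
Arguments T_equiv {L} T phi psi.
Arguments nary_formula {L} T n phi.
Arguments unary_theory {L} T.
Arguments nary_theory {L} T n.

(* Main.v *)
Require Import Defs.
From mathcomp Require Import all_boot.
From Stdlib Require Import List.
From Stdlib Require Import Classical FunctionalExtensionality PeanoNat.

Lemma In_mem (j : nat) (l : list nat) : In j l -> j \in l.
Proof.
elim: l => //= x l IH [->|/IH H]; rewrite inE; [by rewrite eqxx|by rewrite H orbT].
Qed.

Section Aux.
Variable L : signature.

Fixpoint tfreeP (i : nat) (t : term L) : Prop :=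
  match t with
  | tvar j => i = j
  | tapp f args => exists k, tfreeP i (args k)
  end.

Lemma tfree_P i t : tfree L i t -> tfreeP i t.
Proof. elim=> [|f args k _ IH] /=; [done|by exists k]. Qed.

Lemma teval_agree (M : structure L) a b t :
  (forall i, tfree L i t -> a i = b i) -> teval M a t = teval M b t.
Proof.
elim: t => [j|f args IH] H /=; first by apply: H; constructor.
congr (ifun _ M f _); apply: functional_extensionality => k.
apply: IH => i Hi; apply: H; exact: (tfree_app _ _ _ _ k).
Qed.

Lemma sat_agree (M : structure L) phi : forall a b,
  (forall i, ffree i phi -> a i = b i) -> (sat M a phi <-> sat M b phi).
Proof.
elim: phi => [t u|r args|p IH|p IHp q IHq|x p IH] a b H /=.
- rewrite (teval_agree M a b t) ?(teval_agree M a b u) //= => i Hi; apply: H; by [left|right].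
- have -> : (fun k => teval M a (args k)) = (fun k => teval M b (args k)) => //.
  apply: functional_extensionality => k; apply: teval_agree => i Hi; apply: H; by exists k.
- by rewrite (IH a b H).
- by rewrite (IHp a b) ?(IHq a b) // => i Hi; apply: H; [right|left].
- have E : forall d, sat M (update _ M a x d) p <-> sat M (update _ M b x d) p.
    move=> d; apply: IH => i Hi; rewrite /update.
    case: (Nat.eqb_spec i x) => // Hix; apply: H => /=; by split.
  by split=> [[d Hd]|[d Hd]]; exists d; [rewrite -E|rewrite E].
Qed.

Fixpoint trename (s : nat -> nat) (t : term L) : term L :=
  match t with
  | tvar i => tvar (s i)
  | tapp f args => tapp f (fun k => trename s (args k))
  end.

Fixpoint frename (s : nat -> nat) (phi : formula L) : formula L :=
  match phi with
  | feq t u => feq (trename s t) (trename s u)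
  | Defs.frel r args => Defs.frel r (fun k => trename s (args k))
  | fneg p => fneg (frename s p)
  | fand p q => fand (frename s p) (frename s q)
  | fex x p => fex (s x) (frename s p)
  end.

Lemma teval_rename (M : structure L) a s t :
  teval M a (trename s t) = teval M (fun i => a (s i)) t.
Proof.
elim: t => [j|f args IH] //=; congr (ifun _ M f _).
by apply: functional_extensionality => k.
Qed.

Lemma tfree_rename s i t : tfree L i (trename s t) -> exists j, i = s j /\ tfree L j t.
Proof.
move/tfree_P; elim: t => [j|f args IH] /=; first by move=> ->; exists j; split=> //; constructor.
case=> k /IH [j [-> Hj]]; exists j; split=> //; exact: (tfree_app _ _ _ _ k).
Qed.

Lemma sat_rename (M : structure L) s (Hs : injective s) phi : forall a,
  sat M a (frename s phi) <-> sat M (fun i => a (s i)) phi.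
Proof.
elim: phi => [t u|r args|p IH|p IHp q IHq|x p IH] a /=.
- by rewrite !teval_rename.
- have -> // : (fun k => teval M a (trename s (args k))) = (fun k => teval M (fun i => a (s i)) (args k)).
  by apply: functional_extensionality => k; rewrite teval_rename.
- by rewrite IH.
- by rewrite IHp IHq.
- have E : forall d, (fun i => update _ M a (s x) d (s i)) = update _ M (fun i => a (s i)) x d.
    move=> d; apply: functional_extensionality => i; rewrite /update.
    case: (Nat.eqb_spec (s i) (s x)) => [/Hs ->|Hne]; first by rewrite Nat.eqb_refl.
    case: (Nat.eqb_spec i x) => // Hix; by subst.
  by split=> [[d Hd]|[d Hd]]; exists d; [rewrite -E -IH|rewrite IH E].
Qed.

Lemma ffree_rename s phi i : ffree i (frename s phi) -> exists j, i = s j /\ ffree j phi.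
Proof.
elim: phi i => [t u|r args|p IH|p IHp q IHq|x p IH] i /=.
- by case=> /tfree_rename [j [-> Hj]]; exists j; split=> //; [left|right].
- by case=> k /tfree_rename [j [-> Hj]]; exists j; split=> //; exists k.
- exact: IH.
- by case=> [/IHp|/IHq] [j [-> Hj]]; exists j; split=> //; [left|right].
- case=> Hix /IH [j [Ei Hj]]; exists j; split=> //; split=> // Ejx.
  by apply: Hix; rewrite Ei Ejx.
Qed.

Lemma eq_sat (M M' : structure L) c c' psi :
  (forall i j, c i = c j <-> c' i = c' j) -> eq_formula L psi ->
  (sat M c psi <-> sat M' c' psi).
Proof.
move=> Hc; elim=> [i j|p _ IH|p q _ IHp _ IHq] /=; first exact: Hc.
- by rewrite IH.
- by rewrite IHp IHq.
Qed.

Lemma trans_transfer (T : theory L) n (M M' : structure L) c c' theta :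
  m_transitive T n -> is_model T M -> is_model T M' ->
  (forall i j, c i = c j <-> c' i = c' j) -> free_among L n theta ->
  (sat M c theta <-> sat M' c' theta).
Proof.
move=> Htr HM HM' Hc Hth.
pose q := fun phi => free_among L n phi /\ sat M c phi.
have Hq : complete_type T n q.
  split.
  - by move=> phi [].
  - by exists M, c; split=> // phi [].
  - move=> phi Hphi; case: (classic (sat M c phi)) => H; [left|right]; by split.
have F := Htr q Hq M' HM' c'.
have F' : forall phi, q phi -> sat M' c' phi.
  apply: F => psi [_ Hs] He; by apply/(eq_sat M M' c c' psi Hc He).
split=> H; first by apply: F'.
case: (classic (sat M c theta)) => // Hn.
by have : sat M' c' (fneg theta) by apply: F'.
Qed.

Lemma atom_transfer (T : theory L) n (M M' : structure L) c c' chi :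
  m_transitive T n -> is_model T M -> is_model T M' ->
  (forall i j, c i = c j <-> c' i = c' j) -> at_most_free L n chi ->
  (sat M c chi <-> sat M' c' chi).
Proof.
move=> Htr HM HM' Hc [l [Hl Hfl]].
have Hln : size l <= n by apply/leP.
pose l' := undup l.
pose s := fun i => if i \in l' then index i l' else n + i.
pose t := fun i => seq.nth 0 l' i.
have Hsz : size l' <= n by apply: leq_trans (size_undup l) Hln.
have Hs : injective s.
  move=> i j; rewrite /s.
  case: ifP => Hi; case: ifP => Hj.
  - by move=> E; rewrite -(nth_index 0 Hi) E nth_index.
  - move=> E; have := index_mem i l'; rewrite Hi E => H.
    have : n + j < n by apply: leq_trans H Hsz.
    by rewrite ltnNge leq_addr.
  - move=> E; have := index_mem j l'; rewrite Hj -E => H.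
    have : n + i < n by apply: leq_trans H Hsz.
    by rewrite ltnNge leq_addr.
  - by move/eqP; rewrite eqn_add2l => /eqP.
have Hin : forall j, ffree j chi -> j \in l'.
  by move=> j /Hfl Hj; rewrite mem_undup; exact: In_mem.
have Hts : forall j, ffree j chi -> t (s j) = j.
  by move=> j /Hin Hj; rewrite /t /s Hj nth_index.
have Hth : free_among L n (frename s chi).
  move=> i /ffree_rename [j [-> Hj]]; apply/ltP.
  have Hj' := Hin j Hj; rewrite /s Hj'.
  by apply: leq_trans _ Hsz; rewrite index_mem.
have E1 : forall (N : structure L) (e : nat -> dom L N),
    sat N e chi <-> sat N (fun i => e (t i)) (frename s chi).
  move=> N e; rewrite sat_rename //; apply: sat_agree => i Hi /=; by rewrite Hts.
rewrite E1 (E1 M').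
apply: (trans_transfer T n) => // i j; exact: Hc.
Qed.

Lemma bc_transfer (S : formula L -> Prop) (M M' : structure L) c c' psi :
  (forall chi, S chi -> (sat M c chi <-> sat M' c' chi)) ->
  bool_comb L S psi -> (sat M c psi <-> sat M' c' psi).
Proof.
move=> HS; elim=> [phi /HS //|p _ IH|p q _ IHp _ IHq] /=.
- by rewrite IH.
- by rewrite IHp IHq.
Qed.

End Aux.

Theorem proposition1p6 (L : signature) (T : theory L) (n : nat) :
  1 <= n -> complete_theory T -> m_transitive T n -> ~ m_transitive T n.+1 ->
  ~ nary_theory T n.
Proof.
move=> _ _ Htr Hntr Hnary; apply: Hntr.
move=> q [Hqf [M [a [HM Ha]]] Hqc] M' HM' a' Heq phi Hphi.
case: (classic (sat M' a' phi)) => // Hn; exfalso.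
have Heqt : forall i j, i < n.+1 -> j < n.+1 -> (a i = a j <-> a' i = a' j).
  move=> i j Hi Hj.
  have Hf : free_among L n.+1 (feq (tvar i) (tvar j)).
    by move=> k [/tfree_P /= ->|/tfree_P /= ->]; apply/ltP.
  case: (Hqc _ Hf) => Hq.
  - have := Ha _ Hq; have := Heq _ Hq (eqf_eq _ i j) => /= H1 H2; by split.
  - have := Ha _ Hq; have := Heq _ Hq (eqf_neg _ _ (eqf_eq _ i j)) => /= H1 H2.
    by split.
pose r := fun k => if k <= n then k else 0.
have Hr : forall k, r k < n.+1 by move=> k; rewrite /r; case: ifP.
pose e := fun k => a (r k).
pose e' := fun k => a' (r k).
have Hee : forall i j, e i = e j <-> e' i = e' j by move=> i j; apply: Heqt.
have Hagr : forall (N : structure L) (b : nat -> dom L N),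
    sat N b phi <-> sat N (fun k => b (r k)) phi.
  move=> N b; apply: sat_agree => i /(Hqf _ Hphi) /ltP Hi.
  by rewrite /r -ltnS Hi.
have H1 : sat M e phi := proj1 (Hagr M a) (Ha _ Hphi).
have H2 : ~ sat M' e' phi by move=> /(proj2 (Hagr M' a')).
move: Hnary; rewrite /nary_theory; case: ifP => [/eqP En|_].
- case/(_ phi) => psi [Hb Heqv].
  have HT : sat M e psi <-> sat M' e' psi.
    apply: (bc_transfer _ _ M M' e e' psi) Hb.
    move=> chi [Hchi|[i [j ->]]]; first by subst n; apply: (atom_transfer _ T 1).
    exact: Hee.
  apply: H2; apply: (proj2 (Heqv M' HM' e')); apply: (proj1 HT).
  exact: (proj1 (Heqv M HM e) H1).
- case/(_ phi) => psi [Hb Heqv].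
  have HT : sat M e psi <-> sat M' e' psi.
    apply: (bc_transfer _ _ M M' e e' psi) Hb.
    by move=> chi Hchi; apply: (atom_transfer _ T n).
  apply: H2; apply: (proj2 (Heqv M' HM' e')); apply: (proj1 HT).
  exact: (proj1 (Heqv M HM e) H1).
Qed.
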